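(* Let $k$ be a positive integer, let $G$ be a connected graph of order at least $2$ with diameter $\mathrm{diam}(G)<k$, and let $H$ be a connected adjacency $k$-resolved graph of order $n_2$. Then $\mathrm{ldim}_f(G\boxtimes H)\leq n_2\cdot \mathrm{ldim}_f(G)$.
   Context: All graphs are finite, simple and connected; $d$ is the shortest-path distance. For an edge $uv$ of a graph $X$, $L_X(uv)=\{x\in V(X): d_X(u,x)\neq d_X(v,x)\}$. A function $f:V(X)\to[0,1]$ is a local resolving function of $X$ if $\sum_{x\in L_X(uv)}f(x)\geq 1$ for every edge $uv$; $\mathrm{ldim}_f(X)$ is the minimum of $\sum_{v}f(v)$ over all local resolving functions. For vertices $x,y$, the interval $I[x,y]$ is the set of vertices lying on some shortest $x$–$y$ path. A graph $H$ is adjacency $k$-resolved if for every two adjacent vertices $x,y$ there is $w\in V(H)$ such that ($d_H(y,w)\geq k$ and $x\in I[y,w]$) or ($d_H(x,w)\geq k$ and $y\in I[x,w]$). The strong product $G\boxtimes H$ has vertex set $V(G)\times V(H)$, and distinct $(u_1,v_1),(u_2,v_2)$ are adjacent iff ($u_1u_2\in E(G)$ or $u_1=u_2$) and ($v_1v_2\in E(H)$ or $v_1=v_2$). *)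

(* Defs.v *)
From HB Require Import structures.
From mathcomp Require Import all_boot all_order all_algebra.
Set Implicit Arguments. Unset Strict Implicit. Unset Printing Implicit Defensive.
Import Order.TTheory GRing.Theory Num.Theory.

Definition simple_graph (T : finType) (e : rel T) : Prop :=
  (forall x y, e x y = e y x) /\ (forall x, ~~ e x x).

Definition connected_graph (T : finType) (e : rel T) : Prop :=
  forall x y, connect e x y.

Fixpoint ball (T : finType) (e : rel T) (n : nat) (x : T) : {set T} :=
  if n is n'.+1 then
    ball e n' x :|: \bigcup_(z in ball e n' x) [set y | e z y]
  else [set x].

(* Shortest-path distance (correct for connected graphs: d < #|T|). *)
Definition dist (T : finType) (e : rel T) (x y : T) : nat :=
  find (fun n => y \in ball e n x) (iota 0 #|T|).

Definition diam_lt (T : finType) (e : rel T) (k : nat) : Prop :=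
  forall x y, dist e x y < k.

Definition Lset (T : finType) (e : rel T) (u v : T) : {set T} :=
  [set x | dist e u x != dist e v x].

Definition local_resolving_fun (R : realFieldType) (T : finType) (e : rel T)
  (f : T -> R) : Prop :=
  (forall x, (0 <= f x <= 1)%R) /\
  (forall u v, e u v -> (1 <= (\sum_(x in Lset e u v) f x)%R)%R).

Definition is_ldimf (R : realFieldType) (T : finType) (e : rel T) (v : R) : Prop :=
  (exists f : T -> R, local_resolving_fun e f /\ (\sum_x f x)%R = v) /\
  (forall f : T -> R, local_resolving_fun e f -> (v <= (\sum_x f x)%R)%R).

Definition interval (T : finType) (e : rel T) (x y : T) : {set T} :=
  [set z | dist e x z + dist e z y == dist e x y].

Definition adjacency_k_resolved (T : finType) (e : rel T) (k : nat) : Prop :=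
  forall x y, e x y -> exists w,
    ((k <= dist e y w) && (x \in interval e y w)) ||
    ((k <= dist e x w) && (y \in interval e x w)).

Definition strong_prod (T1 T2 : finType) (e1 : rel T1) (e2 : rel T2) : rel (T1 * T2) :=
  fun a b => [&& a != b, (e1 a.1 b.1 || (a.1 == b.1)) & (e2 a.2 b.2 || (a.2 == b.2))].

(* Main.v *)
Require Import Defs.
From HB Require Import structures.
From mathcomp Require Import all_boot all_order all_algebra.
Import Order.TTheory GRing.Theory Num.Theory.

Section Balls.
Variables (T : finType) (e : rel T).

Lemma in_ballS n u x :
  (x \in ball e n.+1 u) = [exists z, (z \in ball e n u) && (e z x || (z == x))].
Proof.
rewrite /= in_setU; apply/orP/existsP.
  case=> [h|/bigcupP[z hz]]; first by exists x; rewrite h eqxx orbT.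
  by rewrite inE => hzx; exists z; rewrite hz hzx.
case=> z /andP[hz /orP[hzx|/eqP<-]]; last by left.
by right; apply/bigcupP; exists z; rewrite ?inE.
Qed.

Lemma ball_mono m n u : m <= n -> ball e m u \subset ball e n u.
Proof.
elim: n => [|n IH]; first by rewrite leqn0 => /eqP->.
rewrite leq_eqVlt => /orP[/eqP->//|h].
apply: subset_trans (IH h) _; exact: subsetUl.
Qed.

Lemma ball_path x p : path e x p -> last x p \in ball e (size p) x.
Proof.
elim/last_ind: p => [|p z IH]; first by rewrite /= inE.
rewrite rcons_path last_rcons size_rcons => /andP[hp he].
rewrite in_ballS; apply/existsP; exists (last x p); by rewrite IH // he.
Qed.

Lemma connect_ball x y : connect e x y -> y \in ball e #|T|.-1 x.
Proof.
case/connectP => p hp ->; case/shortenP: hp => p' hp' hu _.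
have hs : size p' <= #|T|.-1.
  have := card_uniqP hu; have := max_card (mem (x :: p')) => h1 h2.
  rewrite h2 /= in h1; by rewrite -ltnS (ltn_predK h1).
have := subsetP (ball_mono _ _ x hs) _ (ball_path _ _ hp').
  by [].
Qed.

Lemma dist_le1 n x y : y \in ball e n x -> n < #|T| -> dist e x y <= n.
Proof.
move=> hy hn; rewrite leqNgt; apply/negP => hlt.
have := before_find 0 hlt; rewrite nth_iota ?add0n // => /negP; exact.
Qed.

Lemma dist_ball x y : dist e x y < #|T| -> y \in ball e (dist e x y) x.
Proof.
move=> h; have hh : has (fun n => y \in ball e n x) (iota 0 #|T|).
  by rewrite has_find size_iota.
have := nth_find 0 hh; rewrite nth_iota //; by rewrite add0n.
Qed.

Lemma dist_leE_gen n x y : y \in ball e n x -> n < #|T| ->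
  forall m, (dist e x y <= m) = (y \in ball e m x).
Proof.
move=> hy hn m; have hd := dist_le1 _ _ _ hy hn.
have hb := dist_ball _ _ (leq_ltn_trans hd hn).
apply/idP/idP => [hm|hm]; first exact: (subsetP (ball_mono _ _ x hm)).
rewrite leqNgt; apply/negP => hlt.
have := before_find 0 hlt; rewrite nth_iota ?add0n ?hm //.
exact: ltn_trans hlt (leq_ltn_trans hd hn).
Qed.

Lemma dist_leE x y : connected_graph e -> forall m, (dist e x y <= m) = (y \in ball e m x).
Proof.
move=> hc; apply: (dist_leE_gen _ _ _ (connect_ball _ _ (hc x y))).
by rewrite prednK //; apply/card_gt0P; exists x.
Qed.

End Balls.
Section Prod.
Variables (T1 T2 : finType) (e1 : rel T1) (e2 : rel T2).
Local Notation eP := (strong_prod e1 e2).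

Lemma ballX n u v x y :
  ((x, y) \in ball eP n (u, v)) = (x \in ball e1 n u) && (y \in ball e2 n v).
Proof.
elim: n x y => [|n IH] x y; first by rewrite /= !inE xpair_eqE.
rewrite !in_ballS; apply/existsP/andP.
  case=> [[z1 z2]] /andP[]; rewrite IH => /andP[h1 h2].
  rewrite /strong_prod /= => /orP[/and3P[_ r1 r2]|/eqP[<- <-]].
    by split; apply/existsP; [exists z1; rewrite h1 | exists z2; rewrite h2].
  by split; apply/existsP; [exists z1| exists z2]; apply/andP; split => //; apply/orP; right.
case=> /existsP[z1 /andP[h1 r1]] /existsP[z2 /andP[h2 r2]].
exists (z1, z2); rewrite IH h1 h2 /=.
case: (eqVneq (z1, z2) (x, y)) => [->|hne]; first by apply/orP; right.
by rewrite /strong_prod /= hne r1 r2.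
Qed.

Lemma dist_prod u v x y : connected_graph e1 -> connected_graph e2 ->
  dist eP (u, v) (x, y) = maxn (dist e1 u x) (dist e2 v y).
Proof.
move=> c1 c2.
set N := maxn #|T1|.-1 #|T2|.-1.
have hin : (x, y) \in ball eP N (u, v).
  rewrite ballX; apply/andP; split.
    exact: (subsetP (ball_mono _ e1 _ _ u (leq_maxl _ _)) _ (connect_ball _ e1 _ _ (c1 u x))).
  exact: (subsetP (ball_mono _ e2 _ _ v (leq_maxr _ _)) _ (connect_ball _ e2 _ _ (c2 v y))).
have p1 : 0 < #|T1| by apply/card_gt0P; exists x.
have p2 : 0 < #|T2| by apply/card_gt0P; exists y.
have hN : N < #|{: T1 * T2}|.
  rewrite card_prod gtn_max; apply/andP; split.
    apply: (@leq_trans #|T1|); [by rewrite ltn_predL | exact: leq_pmulr].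
  apply: (@leq_trans #|T2|); [by rewrite ltn_predL | exact: leq_pmull].
have key m : (dist eP (u, v) (x, y) <= m) = (maxn (dist e1 u x) (dist e2 v y) <= m).
  by rewrite (dist_leE_gen _ _ _ _ _ hin hN) ballX geq_max (dist_leE _ _ _ _ c1) (dist_leE _ _ _ _ c2).
apply/eqP; rewrite eqn_leq key leqnn /= -key leqnn //.
Qed.
End Prod.
Section Helpers.
Local Open Scope ring_scope.
Lemma sum_sub (R : realFieldType) (T : finType) (A B : {set T}) (F : T -> R) :
  (forall x, (0 <= F x)%R) -> A \subset B ->
  (\sum_(x in A) F x <= \sum_(x in B) F x)%R.
Proof.
move=> h0 hAB.
rewrite [X in (_ <= X)%R](bigID (fun x => x \in A)) /=.
have -> : \sum_(i in B | i \in A) F i = \sum_(i in A) F i.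
  apply: eq_bigl => x; case hx: (x \in A); last by rewrite andbF.
  by rewrite andbT (subsetP hAB).
rewrite lerDl; exact: sumr_ge0.
Qed.

Lemma dist_adj (T : finType) (e : rel T) x y :
  simple_graph e -> connected_graph e -> e x y -> dist e x y = 1%N.
Proof.
move=> [hs hi] hc hxy.
have h1 : (dist e x y <= 1)%N.
  rewrite (dist_leE _ _ _ _ hc) in_ballS; apply/existsP; exists x.
  by rewrite hxy /= set11.
have h0 : ~~ (dist e x y <= 0)%N.
  rewrite (dist_leE _ _ _ _ hc) /= inE; apply/eqP => hyx.
  by move: hxy; rewrite hyx (negbTE (hi x)).
by apply: anti_leq; rewrite h1 /= ltnNge h0.
Qed.

Lemma col_sum (R : realFieldType) (T1 T2 : finType) (f : T1 -> R) (w : T2)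
  (L : {set T1 * T2}) : (forall x, (0 <= f x)%R) ->
  (forall x, (x, w) \in L) -> (\sum_x f x <= \sum_(p in L) f p.1)%R.
Proof.
move=> h0 hL.
have -> : \sum_x f x = \sum_(p in (fun x => (x, w)) @: [set: T1]) f p.1.
  rewrite big_imset /=; first by apply: eq_bigl => x; rewrite inE.
  by move=> x y _ _ [].
have hs : (fun x => (x, w)) @: [set: T1] \subset L.
  apply/subsetP => p /imsetP[x _ ->]; exact: hL.
exact: (sum_sub _ _ _ _ (fun p : T1 * T2 => f p.1) (fun p => h0 p.1) hs).
Qed.

Lemma row_sum (R : realFieldType) (T1 T2 : finType) (f : T1 -> R) (v : T2)
  (A : {set T1}) (L : {set T1 * T2}) : (forall x, (0 <= f x)%R) ->
  (forall x, x \in A -> (x, v) \in L) ->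
  (\sum_(x in A) f x <= \sum_(p in L) f p.1)%R.
Proof.
move=> h0 hL.
have -> : \sum_(x in A) f x = \sum_(p in (fun x => (x, v)) @: A) f p.1.
  by rewrite big_imset //= => x y _ _ [].
have hs : (fun x => (x, v)) @: A \subset L.
  apply/subsetP => p /imsetP[x hx ->]; exact: hL.
exact: (sum_sub _ _ _ _ (fun p : T1 * T2 => f p.1) (fun p => h0 p.1) hs).
Qed.

End Helpers.

Theorem theorem3p4 (R : realFieldType) (k : nat)
  (T1 : finType) (e1 : rel T1) (T2 : finType) (e2 : rel T2)
  (hk : 0 < k)
  (hG : simple_graph e1) (hGc : connected_graph e1) (hG2 : 1 < #|T1|)
  (hdiam : diam_lt e1 k)
  (hH : simple_graph e2) (hHc : connected_graph e2)
  (hHk : adjacency_k_resolved e2 k)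
  (a b : R) (ha : is_ldimf e1 a) (hb : is_ldimf (strong_prod e1 e2) b) :
  (b <= #|T2|%:R * a)%R.
Proof.
case: ha => [[f [[hf01 hfL] hsum]] _].
have hf0 x : (0 <= f x)%R by case/andP: (hf01 x).
have hall : (1 <= \sum_x f x)%R.
  have [x [y hxy]] : exists x y, x != y :> T1.
    case/card_gt1P: hG2 => x [y [_ _ hxy]]; by exists x, y.
  have [z hz] : exists z, e1 x z.
    case/connectP: (hGc x y) => [[|z p]] /=.
      by move=> _ hyx; move: hxy; rewrite hyx eqxx.
    by case/andP => hz _ _; exists z.
  apply: le_trans (hfL _ _ hz) _.
  have -> : (\sum_x f x = \sum_(x in [set: T1]) f x)%R by apply: eq_bigl => t; rewrite inE.
  exact: (sum_sub _ _ _ _ f hf0 (subsetT _)).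
apply: le_trans (hb.2 (fun p => f p.1) _) _.
  split; first by move=> p; exact: hf01.
  move=> [u1 v1] [u2 v2] /and3P[hne /= hu hv].
  case: (eqVneq v1 v2) => [ev|nv].
    subst v2.
    have hu' : e1 u1 u2.
      case/orP: hu => // /eqP eu; by move: hne; rewrite eu eqxx.
    apply: le_trans (hfL _ _ hu') _; apply: (row_sum _ _ _ f v1) => // x.
    rewrite !inE !dist_prod // => hx.
    have d0 : dist e2 v1 v1 = 0.
      by apply/eqP; rewrite -leqn0 (dist_leE _ _ _ _ hHc) /= inE.
    by rewrite d0 !maxn0.
  have hv' : e2 v1 v2 by case/orP: hv => // /eqP ev; move: nv; rewrite ev eqxx.
  case: (hHk _ _ hv') => w /orP[/andP[hk2 hI]|/andP[hk2 hI]].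
    apply: le_trans hall _; apply: (col_sum _ _ _ f w) => // x.
    rewrite inE !dist_prod //.
    move: hI; rewrite inE (dist_adj _ _ _ _ hH hHc) ?(hH.1 v2 v1) // => /eqP hI.
    have h1 := hdiam u1 x; have h2 := hdiam u2 x.
    rewrite (maxn_idPr _) ?(maxn_idPr _); last first.
    - by rewrite -ltnS; apply: leq_trans h1 _; rewrite -add1n hI.
    - by apply: leq_trans (ltnW h2) hk2.
    by rewrite -hI add1n neq_ltn ltnSn.
  apply: le_trans hall _; apply: (col_sum _ _ _ f w) => // x.
  rewrite inE !dist_prod //.
  move: hI; rewrite inE (dist_adj _ _ _ _ hH hHc) // => /eqP hI.
  have h1 := hdiam u1 x; have h2 := hdiam u2 x.
  rewrite (maxn_idPr _) ?(maxn_idPr _); last first.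
  - by apply: leq_trans (ltnW h1) hk2.
  - by rewrite -ltnS; apply: leq_trans h2 _; rewrite -add1n hI.
  by rewrite -hI add1n neq_ltn ltnSn orbT.
rewrite -hsum.
have -> : (\sum_(p : T1 * T2) f p.1 = \sum_x \sum_(y : T2) f x)%R by rewrite pair_bigA.
rewrite mulr_sumr; apply: ler_sum => x _.
by rewrite sumr_const mulr_natl.
Qed.
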